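(* Let $E$ be an arbitrary graph, $X\subseteq{\rm Reg}(E)$, $Y={\rm Reg}(E)\setminus X$, and suppose $E$ satisfies Relative Condition (L). Let $A$ be a ring and $\pi:C_K^X(E)\to A$ a ring homomorphism such that (i) $\pi(u)\neq0$ for every vertex $u\in E^0\setminus Y$; (ii) $\pi\big(v-\sum_{e\in s^{-1}(v)}ee^*\big)\ne0$ for every $v\in Y$; and (iii) $\pi\big(\sum_{e\in s^{-1}(v)}ee^*\big)\neq0$ for every $v\in Y$. Then $\pi$ is injective.
   Context: Let $K$ be a field and $E=(E^0,E^1,r,s)$ a directed graph (no countability or finiteness assumptions). A vertex $v$ is regular if $s^{-1}(v)$ is finite and nonempty; ${\rm Reg}(E)$ is the set of regular vertices. For $X\subseteq{\rm Reg}(E)$, the relative Cohn path algebra $C_K^X(E)$ is the free $K$-algebra generated by $E^0\cup E^1\cup\{e^*:e\in E^1\}$ subject to: $vw=\delta_{v,w}v$; $s(e)e=er(e)=e$ and $r(e)e^*=e^*s(e)=e^*$; $e^*f=\delta_{e,f}r(e)$; $v=\sum_{e\in s^{-1}(v)}ee^*$ for every $v\in X$. A cycle is a path $e_1\cdots e_n$ ($n\ge1$) with $r(e_n)=s(e_1)$ and $s(e_i)\ne s(e_j)$ for $i\ne j$. An exit of $e_1\cdots e_n$ is an edge $e$ with $s(e)=s(e_i)$ for some $i$ and $e\ne e_i$. $E$ satisfies Relative Condition (L) (with respect to $X$) if every cycle $e_1\cdots e_n$ with $s(e_i)\notin Y$ for all $i=1,\dots,n$ has an exit. *)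

(* Defs.v *)
From HB Require Import structures.
From mathcomp Require Import all_boot all_algebra.
From Stdlib Require Import List.

Set Implicit Arguments. Unset Strict Implicit. Unset Printing Implicit Defensive.
Import GRing.Theory.
Local Open Scope ring_scope.

(* A directed graph E = (E^0, E^1, r, s) is given by a vertex type V,
   an edge type Ed and maps r s : Ed -> V (no finiteness assumptions). *)

Definition enumerates (V Ed : Type) (s : Ed -> V) (v : V) (l : list Ed) : Prop :=
  List.NoDup l /\ forall e, List.In e l <-> s e = v.

Definition regular (V Ed : Type) (s : Ed -> V) (v : V) : Prop :=
  exists l, enumerates s v l /\ l <> nil.

Definition Yset (V Ed : Type) (s : Ed -> V) (X : V -> Prop) (v : V) : Prop :=
  regular s v /\ ~ X v.

Fixpoint is_path (V Ed : Type) (r s : Ed -> V) (p : list Ed) : Prop :=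
  match p with
  | nil => True
  | e :: q => match q with
              | nil => True
              | f :: _ => r e = s f /\ is_path r s q
              end
  end.

Definition is_cycle (V Ed : Type) (r s : Ed -> V) (p : list Ed) : Prop :=
  match p with
  | nil => False
  | e1 :: _ => is_path r s p /\ r (List.last p e1) = s e1 /\ List.NoDup (List.map s p)
  end.

Definition has_exit (V Ed : Type) (s : Ed -> V) (p : list Ed) : Prop :=
  exists e f, List.In f p /\ s e = s f /\ e <> f.

Definition relative_condL (V Ed : Type) (r s : Ed -> V) (X : V -> Prop) : Prop :=
  forall p, is_cycle r s p -> (forall f, List.In f p -> ~ Yset s X (s f)) ->
    has_exit s p.

(* Terms of the free (non-unital) K-algebra on E^0 ∪ E^1 ∪ {e^*} *)
Inductive cterm (K V Ed : Type) : Type :=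
| cV : V -> cterm K V Ed
| cE : Ed -> cterm K V Ed
| cG : Ed -> cterm K V Ed          (* ghost edge e^* *)
| c0 : cterm K V Ed
| cadd : cterm K V Ed -> cterm K V Ed -> cterm K V Ed
| cneg : cterm K V Ed -> cterm K V Ed
| cmul : cterm K V Ed -> cterm K V Ed -> cterm K V Ed
| cscal : K -> cterm K V Ed -> cterm K V Ed.

Arguments c0 {K V Ed}.

Fixpoint sumEE (K V Ed : Type) (l : list Ed) : cterm K V Ed :=
  match l with
  | nil => c0
  | e :: q => cadd (cmul (cE K V e) (cG K V e)) (sumEE K V q)
  end.

(* Equality in C_K^X(E): the least congruence containing the
   (non-unital, associative) K-algebra axioms and the defining relations. *)
Inductive cohn_eq (K : fieldType) (V Ed : Type) (r s : Ed -> V) (X : V -> Prop)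
  : cterm K V Ed -> cterm K V Ed -> Prop :=
| ce_refl x : cohn_eq r s X x x
| ce_sym x y : cohn_eq r s X x y -> cohn_eq r s X y x
| ce_trans x y z : cohn_eq r s X x y -> cohn_eq r s X y z -> cohn_eq r s X x z
| ce_add x x' y y' : cohn_eq r s X x x' -> cohn_eq r s X y y' ->
    cohn_eq r s X (cadd x y) (cadd x' y')
| ce_neg x x' : cohn_eq r s X x x' -> cohn_eq r s X (cneg x) (cneg x')
| ce_mul x x' y y' : cohn_eq r s X x x' -> cohn_eq r s X y y' ->
    cohn_eq r s X (cmul x y) (cmul x' y')
| ce_scal c x x' : cohn_eq r s X x x' -> cohn_eq r s X (cscal c x) (cscal c x')
| ce_addA x y z : cohn_eq r s X (cadd x (cadd y z)) (cadd (cadd x y) z)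
| ce_addC x y : cohn_eq r s X (cadd x y) (cadd y x)
| ce_add0 x : cohn_eq r s X (cadd c0 x) x
| ce_addN x : cohn_eq r s X (cadd (cneg x) x) c0
| ce_mulA x y z : cohn_eq r s X (cmul x (cmul y z)) (cmul (cmul x y) z)
| ce_mulDl x y z : cohn_eq r s X (cmul (cadd x y) z) (cadd (cmul x z) (cmul y z))
| ce_mulDr x y z : cohn_eq r s X (cmul x (cadd y z)) (cadd (cmul x y) (cmul x z))
| ce_scalDl (a b : K) x : cohn_eq r s X (cscal (a + b) x) (cadd (cscal a x) (cscal b x))
| ce_scalDr (a : K) x y : cohn_eq r s X (cscal a (cadd x y)) (cadd (cscal a x) (cscal a y))
| ce_scalA (a b : K) x : cohn_eq r s X (cscal (a * b) x) (cscal a (cscal b x))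
| ce_scal1 x : cohn_eq r s X (cscal 1 x) x
| ce_scalMl (a : K) x y : cohn_eq r s X (cscal a (cmul x y)) (cmul (cscal a x) y)
| ce_scalMr (a : K) x y : cohn_eq r s X (cscal a (cmul x y)) (cmul x (cscal a y))
| ce_vv v : cohn_eq r s X (cmul (cV K Ed v) (cV K Ed v)) (cV K Ed v)
| ce_vw v w : v <> w -> cohn_eq r s X (cmul (cV K Ed v) (cV K Ed w)) c0
| ce_se e : cohn_eq r s X (cmul (cV K Ed (s e)) (cE K V e)) (cE K V e)
| ce_er e : cohn_eq r s X (cmul (cE K V e) (cV K Ed (r e))) (cE K V e)
| ce_rg e : cohn_eq r s X (cmul (cV K Ed (r e)) (cG K V e)) (cG K V e)
| ce_gs e : cohn_eq r s X (cmul (cG K V e) (cV K Ed (s e))) (cG K V e)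
| ce_ge e : cohn_eq r s X (cmul (cG K V e) (cE K V e)) (cV K Ed (r e))
| ce_gf e f : e <> f -> cohn_eq r s X (cmul (cG K V e) (cE K V f)) c0
| ce_CK v l : X v -> enumerates s v l -> cohn_eq r s X (cV K Ed v) (sumEE K V l).

(* Main.v *)
Require Import Defs.
From HB Require Import structures.
From mathcomp Require Import all_boot all_algebra.
From Stdlib Require Import List Setoid Morphisms Classical Lia.
Import GRing.Theory.
Set Implicit Arguments. Unset Strict Implicit.

Local Open Scope ring_scope.
Section Alg.
Context (K : fieldType) (V Ed : Type) (r s : Ed -> V) (X : V -> Prop).
Local Notation T := (cterm K V Ed).
Local Notation ceq := (@cohn_eq K V Ed r s X).
Local Notation "x ≈ y" := (@cohn_eq K V Ed r s X x y) (at level 70).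
Local Notation "x ⊕ y" := (@cadd K V Ed x y) (at level 50, left associativity).
Local Notation "x ⊗ y" := (@cmul K V Ed x y) (at level 40, left associativity).
Local Notation vx := (@cV K V Ed).
Local Notation ed := (@cE K V Ed).
Local Notation gh := (@cG K V Ed).
Local Notation z0 := (@c0 K V Ed).
Local Infix "+++" := app (at level 60, right associativity).

#[local] Hint Resolve ce_refl : core.
Global Instance ceq_equiv : Equivalence ceq.
Proof. split; [exact: ce_refl | exact: ce_sym | exact: ce_trans]. Qed.
Global Instance cadd_proper : Proper (ceq ==> ceq ==> ceq) (@cadd K V Ed).
Proof. by move=> ? ? ? ? ? ?; apply: ce_add. Qed.
Global Instance cmul_proper : Proper (ceq ==> ceq ==> ceq) (@cmul K V Ed).
Proof. by move=> ? ? ? ? ? ?; apply: ce_mul. Qed.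
Global Instance cneg_proper : Proper (ceq ==> ceq) (@cneg K V Ed).
Proof. by move=> ? ? ?; apply: ce_neg. Qed.
Global Instance cscal_proper c : Proper (ceq ==> ceq) (@cscal K V Ed c).
Proof. by move=> ? ? ?; apply: ce_scal. Qed.

Lemma addA (x y z : T) : x ⊕ (y ⊕ z) ≈ x ⊕ y ⊕ z. Proof. exact: ce_addA. Qed.
Lemma addC (x y : T) : x ⊕ y ≈ y ⊕ x. Proof. exact: ce_addC. Qed.
Lemma add0 (x : T) : z0 ⊕ x ≈ x. Proof. exact: ce_add0. Qed.
Lemma addr0 (x : T) : x ⊕ z0 ≈ x. Proof. by rewrite addC add0. Qed.
Lemma addN (x : T) : cneg x ⊕ x ≈ z0. Proof. exact: ce_addN. Qed.
Lemma addrN (x : T) : x ⊕ cneg x ≈ z0. Proof. by rewrite addC addN. Qed.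
Lemma mulA (x y z : T) : x ⊗ (y ⊗ z) ≈ x ⊗ y ⊗ z. Proof. exact: ce_mulA. Qed.
Lemma mulDl (x y z : T) : (x ⊕ y) ⊗ z ≈ x ⊗ z ⊕ y ⊗ z. Proof. exact: ce_mulDl. Qed.
Lemma mulDr (x y z : T) : x ⊗ (y ⊕ z) ≈ x ⊗ y ⊕ x ⊗ z. Proof. exact: ce_mulDr. Qed.

Lemma add_cancel (x y z : T) : x ⊕ y ≈ x ⊕ z -> y ≈ z.
Proof.
move=> h.
transitivity (cneg x ⊕ (x ⊕ y)); first by rewrite addA addN add0.
by rewrite h addA addN add0.
Qed.
Lemma add_idem0 (x : T) : x ⊕ x ≈ x -> x ≈ z0.
Proof. by move=> h; apply: (@add_cancel x); rewrite h addr0. Qed.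
Lemma neg_uniq (x y : T) : x ⊕ y ≈ z0 -> y ≈ cneg x.
Proof. by move=> h; apply: (@add_cancel x); rewrite h addrN. Qed.
Lemma mul0l (x : T) : z0 ⊗ x ≈ z0.
Proof. by apply: add_idem0; rewrite -mulDl add0. Qed.
Lemma mul0r (x : T) : x ⊗ z0 ≈ z0.
Proof. by apply: add_idem0; rewrite -mulDr add0. Qed.
Lemma scal0 c : cscal c z0 ≈ z0.
Proof. by apply: add_idem0; rewrite -ce_scalDr add0. Qed.
Lemma scal0k (x : T) : cscal 0 x ≈ z0.
Proof. by apply: add_idem0; rewrite -ce_scalDl GRing.addr0. Qed.
Lemma scal1 (x : T) : cscal 1 x ≈ x. Proof. exact: ce_scal1. Qed.
Lemma scalA a b (x : T) : cscal a (cscal b x) ≈ cscal (a * b) x.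
Proof. by rewrite ce_scalA. Qed.
Lemma scalDl a b (x : T) : cscal (a + b) x ≈ cscal a x ⊕ cscal b x. Proof. exact: ce_scalDl. Qed.
Lemma scalDr a (x y : T) : cscal a (x ⊕ y) ≈ cscal a x ⊕ cscal a y. Proof. exact: ce_scalDr. Qed.
Lemma scalN a (x : T) : cscal (- a) x ≈ cneg (cscal a x).
Proof. apply: neg_uniq; rewrite -scalDl subrr; exact: scal0k. Qed.
Lemma negD (x y : T) : cneg (x ⊕ y) ≈ cneg x ⊕ cneg y.
Proof.
symmetry; apply: neg_uniq.
rewrite -addA (addC y) -(addA (cneg x)) addN addr0 addrN; reflexivity.
Qed.
Lemma neg0 : cneg z0 ≈ z0.
Proof. symmetry; apply: neg_uniq; exact: add0. Qed.
Lemma negK (x : T) : cneg (cneg x) ≈ x.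
Proof. symmetry; apply: neg_uniq; exact: addN. Qed.
Lemma mulNl (x y : T) : cneg x ⊗ y ≈ cneg (x ⊗ y).
Proof. apply: neg_uniq; rewrite -mulDl addrN; exact: mul0l. Qed.
Lemma mulNr (x y : T) : x ⊗ cneg y ≈ cneg (x ⊗ y).
Proof. apply: neg_uniq; rewrite -mulDr addrN; exact: mul0r. Qed.
Lemma scalMl a (x y : T) : cscal a x ⊗ y ≈ cscal a (x ⊗ y). Proof. by rewrite ce_scalMl. Qed.
Lemma scalMr a (x y : T) : x ⊗ cscal a y ≈ cscal a (x ⊗ y). Proof. by rewrite ce_scalMr. Qed.
Lemma scal_mul a b (x y : T) : cscal a x ⊗ cscal b y ≈ cscal (a * b) (x ⊗ y).
Proof. by rewrite scalMl scalMr scalA. Qed.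
Lemma scal_inv (c : K) (x : T) : c != 0 -> cscal c^-1 (cscal c x) ≈ x.
Proof. by move=> h; rewrite scalA mulVf // scal1. Qed.
Lemma sub_eq0 (x y : T) : x ⊕ cneg y ≈ z0 -> x ≈ y.
Proof.
move=> h; rewrite -(addr0 x) -(addN y) addA h add0; reflexivity.
Qed.

Lemma vv v : vx v ⊗ vx v ≈ vx v. Proof. exact: ce_vv. Qed.
Lemma vw v w : v <> w -> vx v ⊗ vx w ≈ z0. Proof. exact: ce_vw. Qed.
Lemma se e : vx (s e) ⊗ ed e ≈ ed e. Proof. exact: ce_se. Qed.
Lemma er e : ed e ⊗ vx (r e) ≈ ed e. Proof. exact: ce_er. Qed.
Lemma rg e : vx (r e) ⊗ gh e ≈ gh e. Proof. exact: ce_rg. Qed.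
Lemma gs e : gh e ⊗ vx (s e) ≈ gh e. Proof. exact: ce_gs. Qed.
Lemma ge e : gh e ⊗ ed e ≈ vx (r e). Proof. exact: ce_ge. Qed.
Lemma gf e f : e <> f -> gh e ⊗ ed f ≈ z0. Proof. exact: ce_gf. Qed.

Lemma vE_ne u e : u <> s e -> vx u ⊗ ed e ≈ z0.
Proof. by move=> h; rewrite -se mulA vw // mul0l. Qed.
Lemma vG_ne u e : u <> r e -> vx u ⊗ gh e ≈ z0.
Proof. by move=> h; rewrite -rg mulA vw // mul0l. Qed.
Lemma Gv_ne u e : u <> s e -> gh e ⊗ vx u ≈ z0.
Proof. by move=> h; rewrite -gs -mulA vw; [exact: mul0r | auto]. Qed.

Definition startv (a : list Ed) (v : V) : V :=
  match a with nil => v | e :: _ => s e end.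
Fixpoint vpath (a : list Ed) (v : V) : Prop :=
  match a with nil => True | e :: a' => r e = startv a' v /\ vpath a' v end.
Fixpoint Pt (a : list Ed) (v : V) : T :=
  match a with nil => vx v | e :: a' => ed e ⊗ Pt a' v end.
Fixpoint Gt (b : list Ed) (v : V) : T :=
  match b with nil => vx v | e :: b' => Gt b' v ⊗ gh e end.

Lemma P_v a v : Pt a v ⊗ vx v ≈ Pt a v.
Proof. elim: a => [|e a IH] /=; [exact: vv | by rewrite -mulA IH]. Qed.
Lemma P_v_ne a v u : u <> v -> Pt a v ⊗ vx u ≈ z0.
Proof.
move=> h; elim: a => [|e a IH] /=; first by apply: vw; auto.
by rewrite -mulA IH mul0r.
Qed.
Lemma v_P a v : vx (startv a v) ⊗ Pt a v ≈ Pt a v.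
Proof. case: a => [|e a] /=; [exact: vv | by rewrite mulA se]. Qed.
Lemma v_P_ne a v u : u <> startv a v -> vx u ⊗ Pt a v ≈ z0.
Proof.
case: a => [|e a] /= h; first exact: vw.
by rewrite mulA vE_ne // mul0l.
Qed.
Lemma v_G b v : vx v ⊗ Gt b v ≈ Gt b v.
Proof. elim: b => [|e b IH] /=; [exact: vv | by rewrite mulA IH]. Qed.
Lemma G_v b v : Gt b v ⊗ vx (startv b v) ≈ Gt b v.
Proof. case: b => [|e b] /=; [exact: vv | by rewrite -mulA gs]. Qed.
Lemma G_v_ne b v u : u <> startv b v -> Gt b v ⊗ vx u ≈ z0.
Proof.
case: b => [|e b] /= h; first by apply: vw; auto.
by rewrite -mulA Gv_ne // mul0r.
Qed.
Lemma startv_rcons a e v : startv (a +++ [:: e]) v = startv a (s e).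
Proof. by case: a. Qed.
Lemma vpath_rcons a e : vpath a (s e) -> vpath (a +++ [:: e]) (r e).
Proof.
elim: a => [|f a IH] /=; first by [].
by case=> h1 h2; split; [rewrite startv_rcons | exact: IH].
Qed.
Lemma P_E a e : Pt a (s e) ⊗ ed e ≈ Pt (a +++ [:: e]) (r e).
Proof.
elim: a => [|f a IH] /=; first by rewrite se er.
by rewrite -mulA IH.
Qed.
Lemma P_E_ne a v e : v <> s e -> Pt a v ⊗ ed e ≈ z0.
Proof. by move=> h; rewrite -P_v -mulA vE_ne // mul0r. Qed.
Lemma G_E_eq b v e : vpath (e :: b) v -> Gt (e :: b) v ⊗ ed e ≈ Gt b v.
Proof. by case=> h _ /=; rewrite -mulA ge h G_v. Qed.
Lemma G_E_ne b v e f : f <> e -> Gt (f :: b) v ⊗ ed e ≈ z0.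
Proof. by move=> h /=; rewrite -mulA gf // mul0r. Qed.
Lemma G_G_ne b v e : r e <> startv b v -> Gt b v ⊗ gh e ≈ z0.
Proof.
move=> h; rewrite -G_v -rg -mulA (mulA (vx _)) (@vw (startv b v) (r e)); last by auto.
by rewrite mul0l mul0r.
Qed.

Record mono := Mono { ma : list Ed; mb : list Ed; mvx : V }.
Definition mval (m : mono) : T := Pt (ma m) (mvx m) ⊗ Gt (mb m) (mvx m).
Definition valid (m : mono) := vpath (ma m) (mvx m) /\ vpath (mb m) (mvx m).
Definition oval (om : option mono) : T := if om is Some m then mval m else z0.
Definition ovalid (om : option mono) := if om is Some m then valid m else True.
Definition rv (m : mono) := startv (mb m) (mvx m).
Definition lv (m : mono) := startv (ma m) (mvx m).

Lemma mV m : mval m ⊗ vx (rv m) ≈ mval m.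
Proof. by rewrite /mval -mulA G_v. Qed.
Lemma mV_ne m u : u <> rv m -> mval m ⊗ vx u ≈ z0.
Proof. by move=> h; rewrite /mval -mulA G_v_ne // mul0r. Qed.
Lemma Vm m : vx (lv m) ⊗ mval m ≈ mval m.
Proof. by rewrite /mval mulA v_P. Qed.
Lemma Vm_ne m u : u <> lv m -> vx u ⊗ mval m ≈ z0.
Proof. by move=> h; rewrite /mval mulA v_P_ne // mul0l. Qed.
Lemma mE_nil a v e : v = s e ->
  mval (Mono a nil v) ⊗ ed e ≈ mval (Mono (a +++ [:: e]) nil (r e)).
Proof.
move=> ->; rewrite /mval /= -mulA se P_v P_E; reflexivity.
Qed.
Lemma mE_nil_ne a v e : v <> s e -> mval (Mono a nil v) ⊗ ed e ≈ z0.
Proof. by move=> h; rewrite /mval /= -mulA vE_ne // mul0r. Qed.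
Lemma mE_eq a b v e : vpath (e :: b) v ->
  mval (Mono a (e :: b) v) ⊗ ed e ≈ mval (Mono a b v).
Proof. by move=> h; rewrite /mval /= -mulA -/(Gt (e :: b) v) G_E_eq. Qed.
Lemma mE_ne a b v e f : f <> e -> mval (Mono a (f :: b) v) ⊗ ed e ≈ z0.
Proof. by move=> h; rewrite /mval /= -mulA -/(Gt (f :: b) v) G_E_ne // mul0r. Qed.
Lemma mG a b v e : mval (Mono a b v) ⊗ gh e ≈ mval (Mono a (e :: b) v).
Proof. by rewrite /mval /= -mulA. Qed.
Lemma mG_ne a b v e : r e <> startv b v -> mval (Mono a b v) ⊗ gh e ≈ z0.
Proof. by move=> h; rewrite /mval /= -mulA G_G_ne // mul0r. Qed.

Lemma stepV m u : exists om, mval m ⊗ vx u ≈ oval om /\ (valid m -> ovalid om).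
Proof.
case: (classic (u = rv m)) => [->|h]; first by exists (Some m); split=> //; exact: mV.
by exists None; split=> //; exact: mV_ne.
Qed.
Lemma stepE m e : valid m -> exists om, mval m ⊗ ed e ≈ oval om /\ ovalid om.
Proof.
case: m => a b v; rewrite /valid /= => -[ha hb]; case: b hb => [|f b] hb.
  case: (classic (v = s e)) => h.
    exists (Some (Mono (a +++ [:: e]) nil (r e))); split; first exact: mE_nil.
    by split=> //=; apply: vpath_rcons; rewrite -h.
  by exists None; split=> //; exact: mE_nil_ne.
case: (classic (f = e)) => [<-|h].
  by exists (Some (Mono a b v)); split; [exact: mE_eq | split=> //; case: hb].
by exists None; split=> //; exact: mE_ne.
Qed.
Lemma stepG m e : valid m -> exists om, mval m ⊗ gh e ≈ oval om /\ ovalid om.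
Proof.
case: m => a b v; rewrite /valid /= => -[ha hb].
case: (classic (r e = startv b v)) => h.
  by exists (Some (Mono a (e :: b) v)); split; [exact: mG | split].
by exists None; split=> //; exact: mG_ne.
Qed.

Lemma omul_P om a u : ovalid om -> exists om', oval om ⊗ Pt a u ≈ oval om' /\ ovalid om'.
Proof.
elim: a om => [|e a IH] om hv /=.
  case: om hv => [m|] hv /=; last by exists None; split=> //; exact: mul0l.
  by have [om [h1 h2]] := stepV m u; exists om; split=> //; apply: h2.
case: om hv => [m|] hv /=; last by exists None; split=> //; exact: mul0l.
have [om [h1 h2]] := stepE e hv.
have [om' [h3 h4]] := IH om h2.
by exists om'; split=> //; rewrite mulA h1 h3.
Qed.
Lemma omul_G om b u : ovalid om -> exists om', oval om ⊗ Gt b u ≈ oval om' /\ ovalid om'.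
Proof.
elim: b om => [|e b IH] om hv /=.
  case: om hv => [m|] hv /=; last by exists None; split=> //; exact: mul0l.
  by have [om [h1 h2]] := stepV m u; exists om; split=> //; apply: h2.
have [om1 [h1 h2]] := IH om hv.
case: om1 h1 h2 => [m|] h1 h2; last by exists None; split=> //; rewrite mulA h1 /=; exact: mul0l.
have [om2 [h3 h4]] := stepG e h2.
by exists om2; split=> //; rewrite mulA h1 /= h3.
Qed.
Lemma mmul m1 m2 : valid m1 -> exists om, mval m1 ⊗ mval m2 ≈ oval om /\ ovalid om.
Proof.
move=> hv; have [om [h1 h2]] := @omul_P (Some m1) (ma m2) (mvx m2) hv.
have [om' [h3 h4]] := omul_G (mb m2) (mvx m2) h2.
by exists om'; split=> //; rewrite /mval mulA -/(mval m1) /= -/(oval (Some m1)) h1 h3.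
Qed.

Fixpoint sumW (A : Type) (f : A -> T) (L : list (K * A)) : T :=
  match L with nil => z0 | (k, a) :: L' => cscal k (f a) ⊕ sumW f L' end.

Lemma sumW_app A (f : A -> T) L1 L2 : sumW f (L1 +++ L2) ≈ sumW f L1 ⊕ sumW f L2.
Proof.
elim: L1 => [|[k a] L1 IH] /=; first by rewrite add0.
by rewrite IH addA.
Qed.
Lemma sumW_mulr A (f : A -> T) L y : sumW f L ⊗ y ≈ sumW (fun a => f a ⊗ y) L.
Proof.
elim: L => [|[k a] L IH] /=; first exact: mul0l.
by rewrite mulDl IH scalMl.
Qed.
Lemma sumW_mull A (f : A -> T) L y : y ⊗ sumW f L ≈ sumW (fun a => y ⊗ f a) L.
Proof.
elim: L => [|[k a] L IH] /=; first exact: mul0r.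
by rewrite mulDr IH scalMr.
Qed.
Lemma sumW_ext A (f g : A -> T) L : (forall k a, In (k, a) L -> f a ≈ g a) -> sumW f L ≈ sumW g L.
Proof.
elim: L => [|[k a] L IH] h /=; first reflexivity.
rewrite (h k a) ?IH //; [by move=> k' a' hi; apply: (h k'); right | by left].
Qed.
Lemma sumW_neg A (f : A -> T) L :
  cneg (sumW f L) ≈ sumW f (List.map (fun ka => (- ka.1, ka.2)) L).
Proof.
elim: L => [|[k a] L IH] /=; first exact: neg0.
by rewrite negD IH scalN.
Qed.
Lemma sumW_scal A (f : A -> T) c L :
  cscal c (sumW f L) ≈ sumW f (List.map (fun ka => (c * ka.1, ka.2)) L).
Proof.
elim: L => [|[k a] L IH] /=; first exact: scal0.
by rewrite scalDr IH scalA.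
Qed.

Lemma sumW_map_ex A B (F : A -> T) (g : B -> T) (Q : B -> Prop) (L : list (K * A)) :
  (forall k a, In (k, a) L -> exists Lb, cscal k (F a) ≈ sumW g Lb /\
       (forall x, In x Lb -> Q x.2) /\ le (length Lb) 1) ->
  exists L', sumW F L ≈ sumW g L' /\ (forall x, In x L' -> Q x.2) /\ le (length L') (length L).
Proof.
elim: L => [|[k a] L IH] h /=; first by exists nil; split; [reflexivity | split=> //; lia].
have [Lb [h1 [h2 h3]]] := h k a (or_introl erefl).
have [L' [h4 [h5 h6]]] : exists L', sumW F L ≈ sumW g L' /\ (forall x, In x L' -> Q x.2) /\ le (length L') (length L).
  by apply: IH => k' a' hi; apply: h; right.
exists (Lb +++ L'); split; first by rewrite sumW_app h1 h4.
split; last by rewrite List.length_app; lia.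
by move=> x /(@in_app_or _ _ _ x) [] hx; [apply: h2 | apply: h5].
Qed.

Definition vlist (L : list (K * mono)) := forall x, In x L -> valid x.2.
Definition sumL := sumW mval.

Lemma oval_sum k om : exists Lb, cscal k (oval om) ≈ sumL Lb /\
   (ovalid om -> forall x, In x Lb -> valid x.2) /\ le (length Lb) 1.
Proof.
case: om => [m|] /=.
  by exists [:: (k, m)]; split; [rewrite /sumL /= addr0; reflexivity | split=> [h x [<-|]|] //=].
by exists nil; split; [exact: scal0 | split=> //=; lia].
Qed.

Lemma sum_mul L1 L2 : vlist L1 -> vlist L2 -> exists L, sumL L1 ⊗ sumL L2 ≈ sumL L /\ vlist L.
Proof.
elim: L1 => [|[k1 m1] L1 IH] h1 h2 /=.
  by exists nil; split; [exact: mul0l | move=> ? []].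
have [La [ha hva]] : exists La, cscal k1 (mval m1) ⊗ sumL L2 ≈ sumL La /\ vlist La.
  have [L' [e1 [e2 _]]] := @sumW_map_ex _ _ (fun a => cscal k1 (mval m1) ⊗ mval a) mval valid L2
     ltac:(move=> k a hi; have [om [o1 o2]] := @mmul m1 a (h1 _ (or_introl erefl));
           have [Lb [b1 [b2 b3]]] := oval_sum (k * k1) om;
           exists Lb; split; [rewrite scalMl scalA o1 b1; reflexivity | split=> //; exact: b2]).
  by exists L'; split=> //; rewrite /sumL sumW_mull.
have [Lb [hb hvb]] := IH (fun x hx => h1 x (or_intror hx)) h2.
exists (La +++ Lb); split; first by rewrite /sumL sumW_app -/sumL -ha -hb mulDl.
by move=> x /(@in_app_or _ _ _ x) [] hx; [apply: hva | apply: hvb].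
Qed.

Lemma nf (x : T) : exists L, x ≈ sumL L /\ vlist L.
Proof.
elim: x => [v|e|e| |x [L1 [e1 v1]] y [L2 [e2 v2]] |x [L1 [e1 v1]] |x [L1 [e1 v1]] y [L2 [e2 v2]]|c x [L1 [e1 v1]]].
- exists [:: (1, Mono nil nil v)]; split; last by move=> ? [<-|].
  by rewrite /sumL /= addr0 scal1 /mval /= vv.
- exists [:: (1, Mono [:: e] nil (r e))]; split; last by move=> ? [<-|].
  by rewrite /sumL /= addr0 scal1 /mval /= !er.
- exists [:: (1, Mono nil [:: e] (r e))]; split; last by move=> ? [<-|].
  by rewrite /sumL /= addr0 scal1 /mval /= rg rg.
- by exists nil; split; [reflexivity | move=> ? []].
- exists (L1 +++ L2); split; first by rewrite /sumL sumW_app -/sumL -e1 -e2.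
  by move=> z /(@in_app_or _ _ _ z) [] hz; [apply: v1 | apply: v2].
- exists (List.map (fun ka => (- ka.1, ka.2)) L1); split; first by rewrite e1 /sumL sumW_neg.
  by move=> z /in_map_iff [[k m] [<- hi]]; apply: (v1 _ hi).
- have [L [h hv]] := sum_mul v1 v2; exists L; split=> //; by rewrite e1 e2.
- exists (List.map (fun ka => (c * ka.1, ka.2)) L1); split; first by rewrite e1 /sumL sumW_scal.
  by move=> z /in_map_iff [[k m] [<- hi]]; apply: (v1 _ hi).
Qed.


Lemma sumW_zero A0 (f : A0 -> T) L : (forall k a, In (k, a) L -> f a ≈ z0) -> sumW f L ≈ z0.
Proof.
elim: L => [|[k a] L IH] h /=; first by [].
rewrite (h k a (or_introl erefl)) scal0 add0; apply: IH => k' a' hi; apply: (h k'); by right.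
Qed.

Lemma sumW_part A0 (f : A0 -> T) (P : A0 -> Prop) L : exists LA LB,
  sumW f L ≈ sumW f LA ⊕ sumW f LB /\
  (forall x, In x LA -> In x L /\ P x.2) /\ (forall x, In x LB -> In x L /\ ~ P x.2) /\
  (length LA + length LB)%coq_nat = length L /\ (forall x, In x L -> P x.2 -> In x LA).
Proof.
elim: L => [|[k a] L [LA [LB [h1 [h2 [h3 [h4 h5]]]]]]] /=.
  by exists nil, nil; split; [rewrite add0 | split=> //].
case: (classic (P a)) => hP.
  exists ((k, a) :: LA), LB; split; first by rewrite /= h1 addA.
  split; first by move=> x [<-|hx]; [split=> //; left | have := h2 x hx; case=> ? ?; split=> //; right].
  split; first by move=> x hx; have := h3 x hx; case=> ? ?; split=> //; right.
  split; first by rewrite /= -h4.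
  by move=> x [<-|hx] hp; [left | right; apply: h5].
exists LA, ((k, a) :: LB); split.
  rewrite /= h1 addA (addC (cscal k (f a))) -addA; reflexivity.
split; first by move=> x hx; have := h2 x hx; case=> ? ?; split=> //; right.
split; first by move=> x [<-|hx]; [split=> //; left | have := h3 x hx; case=> ? ?; split=> //; right].
split; first by rewrite /= -h4; lia.
by move=> x [<-|hx] hp; [done | apply: h5].
Qed.

Lemma min_elem A0 (L : list (K * A0)) (g : A0 -> nat) : L <> nil ->
  exists x, In x L /\ forall y, In y L -> le (g x.2) (g y.2).
Proof.
elim: L => [|a L IH] // _.
case: L IH => [|b L] IH.
  by exists a; split; [left | move=> y [<-|[]]].
have [x [hx hm]] := IH ltac:(done).
case: (Compare_dec.le_lt_dec (g a.2) (g x.2)) => h.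
  exists a; split; first by left.
  by move=> y [<-|hy]; [lia | have := hm y hy; lia].
exists x; split; first by right.
by move=> y [<-|hy]; [lia | exact: hm].
Qed.

Lemma nodup_ex (F : list Ed) : exists l, NoDup l /\ forall x, In x l <-> In x F.
Proof.
elim: F => [|a F [l [h1 h2]]]; first by exists nil; split; [constructor | done].
case: (classic (In a l)) => ha.
  exists l; split=> // x; rewrite h2; split; [by right | case=> [<-|//]; by rewrite -h2].
exists (a :: l); split; first by constructor.
by move=> x /=; rewrite h2.
Qed.

Context (HX : forall v, X v -> regular s v) (HL : relative_condL r s X)
  (A : pzRingType) (pi : T -> A)
  (pi_wd : forall x y, x ≈ y -> pi x = pi y)
  (pi_add : forall x y, pi (x ⊕ y) = pi x + pi y)
  (pi_mul : forall x y, pi (x ⊗ y) = pi x * pi y)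
  (H1 : forall u, ~ Yset s X u -> pi (vx u) <> 0)
  (H2 : forall v l, Yset s X v -> enumerates s v l ->
          pi (vx v ⊕ cneg (sumEE K V l)) <> 0).

Lemma pi0 : pi z0 = 0.
Proof.
have h : pi (z0 ⊕ z0) = pi z0 by apply: pi_wd; exact: add0.
rewrite pi_add in h.
by have := congr1 (fun t => t - pi z0) h; rewrite GRing.addrK GRing.subrr.
Qed.
Lemma pi_eq0 x : x ≈ z0 -> pi x = 0.
Proof. by move=> h; rewrite (pi_wd h) pi0. Qed.
Lemma pi_l x y : pi y = 0 -> pi (x ⊗ y) = 0.
Proof. by move=> h; rewrite pi_mul h GRing.mulr0. Qed.
Lemma pi_r x y : pi x = 0 -> pi (x ⊗ y) = 0.
Proof. by move=> h; rewrite pi_mul h GRing.mul0r. Qed.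
Lemma pi_neg x : pi (cneg x) = - pi x.
Proof.
have h : pi (cneg x ⊕ x) = 0 by apply: pi_eq0; exact: addN.
by rewrite pi_add in h; apply/eqP; rewrite -GRing.addr_eq0; apply/eqP.
Qed.

Lemma pi_scal_inv c u x : c != 0 -> vx u ⊗ x ≈ x -> pi (cscal c x) = 0 -> pi x = 0.
Proof.
move=> hc hu h.
have e : x ≈ cscal c^-1 (vx u) ⊗ cscal c x.
  by rewrite scal_mul GRing.mulVf // scal1 hu.
by rewrite (pi_wd e); apply: pi_l.
Qed.

Definition qv v l := vx v ⊕ cneg (sumEE K V l).

Lemma sumEE_mulr_zero l y : (forall e, In e l -> y ⊗ ed e ≈ z0) -> y ⊗ sumEE K V l ≈ z0.
Proof.
elim: l => [|e l IH] h /=; first exact: mul0r.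
rewrite mulDr mulA (h e (or_introl erefl)) mul0l add0; apply: IH => f hf; apply: h; by right.
Qed.
Lemma sumEE_e_notin l f : ~ In f l -> sumEE K V l ⊗ ed f ≈ z0.
Proof.
elim: l => [|e l IH] h /=; first exact: mul0l.
rewrite mulDl -mulA gf; last by move=> ef; apply: h; left.
by rewrite mul0r add0 IH // => hf; apply: h; right.
Qed.
Lemma sumEE_e l f : NoDup l -> In f l -> sumEE K V l ⊗ ed f ≈ ed f.
Proof.
elim: l => [|e l IH] hn //= hf.
inversion hn as [|? ? hnin hnd]; subst.
rewrite mulDl -mulA.
case: hf => [<-|hf].
  by rewrite ge er sumEE_e_notin // addr0.
rewrite gf; last by move=> ef; subst; apply: hnin.
by rewrite mul0r add0 IH.
Qed.
Lemma g_sumEE_notin l f : ~ In f l -> gh f ⊗ sumEE K V l ≈ z0.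
Proof.
elim: l => [|e l IH] h /=; first exact: mul0r.
rewrite mulDr mulA gf; last by move=> ef; apply: h; left.
by rewrite mul0l add0 IH // => hf; apply: h; right.
Qed.
Lemma g_sumEE l f : NoDup l -> In f l -> gh f ⊗ sumEE K V l ≈ gh f.
Proof.
elim: l => [|e l IH] hn //= hf.
inversion hn as [|? ? hnin hnd]; subst.
rewrite mulDr mulA.
case: hf => [<-|hf].
  by rewrite ge rg g_sumEE_notin // addr0.
rewrite gf; last by move=> ef; subst; apply: hnin.
by rewrite mul0l add0 IH.
Qed.
Lemma v_sumEE v l : (forall e, In e l -> s e = v) -> vx v ⊗ sumEE K V l ≈ sumEE K V l.
Proof.
elim: l => [|e l IH] h /=; first exact: mul0r.
have he : vx v ⊗ ed e ≈ ed e by rewrite -(h e (or_introl erefl)) se.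
by rewrite mulDr mulA he IH // => f hf; apply: h; right.
Qed.

Section Q.
Variable (v : V) (l : list Ed) (hen : enumerates s v l).
Lemma q_e f : s f = v -> qv v l ⊗ ed f ≈ z0.
Proof.
move=> hf; case: hen => hnd hin.
rewrite /qv mulDl mulNl sumEE_e //; last by apply/hin.
by rewrite -hf se addrN.
Qed.
Lemma g_q f : s f = v -> gh f ⊗ qv v l ≈ z0.
Proof.
move=> hf; case: hen => hnd hin.
rewrite /qv mulDr mulNr g_sumEE //; last by apply/hin.
by rewrite -hf gs addrN.
Qed.
Lemma v_q : vx v ⊗ qv v l ≈ qv v l.
Proof.
case: hen => hnd hin.
rewrite /qv mulDr mulNr vv v_sumEE //; by move=> e /hin.
Qed.
Lemma q_v : qv v l ⊗ vx v ≈ qv v l.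
Proof.
rewrite /qv mulDl mulNl vv; apply: cadd_proper => //; apply: cneg_proper.
have: forall l', (forall e, In e l' -> s e = v) -> sumEE K V l' ⊗ vx v ≈ sumEE K V l'.
  elim=> [|e l' IH] h /=; first exact: mul0l.
  have he : gh e ⊗ vx v ≈ gh e by rewrite -(h e (or_introl erefl)) gs.
  rewrite mulDl -mulA he IH //; by move=> f hf; apply: h; right.
by apply; case: hen => _ hin e /hin.
Qed.
Lemma q_sumEE : qv v l ⊗ sumEE K V l ≈ z0.
Proof. by apply: sumEE_mulr_zero => e he; apply: q_e; case: hen => _ /(_ e) [] /(_ he). Qed.
Lemma q_q : qv v l ⊗ qv v l ≈ qv v l.
Proof. by rewrite {2}/qv mulDr mulNr q_sumEE neg0 addr0 q_v. Qed.
Lemma q_P a : a <> nil -> startv a v = v -> qv v l ⊗ Pt a v ≈ z0.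
Proof.
case: a => [|f a] // _ /= hf.
by rewrite mulA q_e // mul0l.
Qed.
Lemma v_decomp : vx v ≈ qv v l ⊕ sumEE K V l.
Proof. by rewrite /qv -addA addN addr0. Qed.
Lemma QV c : Yset s X v -> c != 0 -> pi (cscal c (qv v l)) = 0 -> False.
Proof.
move=> hy hc h; apply: (H2 hy hen).
by apply: (pi_scal_inv hc v_q h).
Qed.
End Q.

Lemma V0 c u : c != 0 -> pi (cscal c (vx u)) = 0 -> False.
Proof.
move=> hc h; case: (classic (Yset s X u)) => hy.
  have [[l [hen _]] _] := hy.
  apply: (@QV u l hen c hy hc).
  have e : cscal c (qv u l) ≈ qv u l ⊗ cscal c (vx u).
    by rewrite scalMr q_v.
  by rewrite (pi_wd e); apply: pi_l.
by apply: (H1 hy); apply: (pi_scal_inv hc (vv u) h).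
Qed.

Definition sumR w := sumW (fun a => Pt a w).
Definition closedp u g := g <> nil /\ vpath g u /\ startv g u = u.
Definition clist u (C : list (K * list Ed)) := forall x, In x C -> closedp u x.2.
Definition St u c C := cscal c (vx u) ⊕ sumR u C.

Lemma ws_eq e rho : closedp (s e) (e :: rho) ->
  gh e ⊗ Pt (e :: rho) (s e) ⊗ ed e ≈ Pt (rho +++ [:: e]) (r e) /\ closedp (r e) (rho +++ [:: e]).
Proof.
case=> _ [[hr hv] _]; split.
  rewrite /= mulA ge {1}hr v_P P_E; reflexivity.
split; first by case: rho {hr hv}.
split; first exact: vpath_rcons.
by rewrite startv_rcons.
Qed.
Lemma ws_ne e f rho u : f <> e -> gh e ⊗ Pt (f :: rho) u ⊗ ed e ≈ z0.
Proof. by move=> h /=; rewrite mulA gf; [rewrite !mul0l | auto]. Qed.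
Lemma ws_v c e : gh e ⊗ cscal c (vx (s e)) ⊗ ed e ≈ cscal c (vx (r e)).
Proof. by rewrite scalMr gs scalMl ge. Qed.
Lemma sw_add e x y : gh e ⊗ (x ⊕ y) ⊗ ed e ≈ gh e ⊗ x ⊗ ed e ⊕ gh e ⊗ y ⊗ ed e.
Proof. by rewrite mulDr mulDl. Qed.
Lemma sw_scal e k x : gh e ⊗ cscal k x ⊗ ed e ≈ cscal k (gh e ⊗ x ⊗ ed e).
Proof. by rewrite scalMr scalMl. Qed.

Lemma ws_list e C : clist (s e) C -> exists C',
  gh e ⊗ sumR (s e) C ⊗ ed e ≈ sumR (r e) C' /\ clist (r e) C' /\ le (length C') (length C).
Proof.
move=> hC.
have [C' [h1 [h2 h3]]] := @sumW_map_ex _ _ (fun a => gh e ⊗ Pt a (s e) ⊗ ed e) (fun a => Pt a (r e))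
   (closedp (r e)) C
   ltac:(move=> k a hi; have := hC _ hi; case: a hi => [|f rho] hi /= hcl; [by case: hcl | ];
         case: (classic (f = e)) => [hfe|hne];
         [ subst f; have [w1 w2] := ws_eq hcl; exists [:: (k, rho +++ [:: e])];
           split; [rewrite /= w1 addr0; reflexivity | split; [by move=> x [<-|] | simpl; lia]]
         | exists nil; split; [rewrite /= ws_ne // scal0; reflexivity | split; [by [] | simpl; lia]]]).
exists C'; split=> //; rewrite /sumR sumW_mull sumW_mulr; exact: h1.
Qed.

Lemma ws_cons_eq e c k rho C : clist (s e) ((k, e :: rho) :: C) -> exists C',
  gh e ⊗ St (s e) c ((k, e :: rho) :: C) ⊗ ed e ≈ St (r e) c ((k, rho +++ [:: e]) :: C') /\
  clist (r e) ((k, rho +++ [:: e]) :: C') /\ le (length C') (length C).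
Proof.
move=> hC.
have [C' [h1 [h2 h3]]] := @ws_list e C (fun x hx => hC x (or_intror hx)).
have [w1 w2] := ws_eq (hC _ (or_introl erefl)).
exists C'; split; last by split=> // x [<-|hx]; [exact: w2 | exact: h2].
rewrite /St /sumR /= -/(sumR (s e) C) -/(sumR (r e) C') sw_add sw_add ws_v sw_scal w1 h1; reflexivity.
Qed.
Lemma ws_cons_ne e f c k rho C : f <> e -> clist (s e) ((k, f :: rho) :: C) -> exists C',
  gh e ⊗ St (s e) c ((k, f :: rho) :: C) ⊗ ed e ≈ St (r e) c C' /\
  clist (r e) C' /\ le (length C') (length C).
Proof.
move=> hne hC.
have [C' [h1 [h2 h3]]] := @ws_list e C (fun x hx => hC x (or_intror hx)).
exists C'; split=> //.
rewrite /St /sumR /= -/(sumR (s e) C) sw_add sw_add ws_v sw_scal ws_ne // scal0 add0 h1; reflexivity.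
Qed.

Lemma walk tau : forall rho u c k C, clist u ((k, tau +++ rho) :: C) ->
  pi (St u c ((k, tau +++ rho) :: C)) = 0 -> exists u' C',
  clist u' ((k, rho +++ tau) :: C') /\ le (length C') (length C) /\
  pi (St u' c ((k, rho +++ tau) :: C')) = 0.
Proof.
elim: tau => [|e tau IH] rho u c k C hC hp.
  by exists u, C; rewrite app_nil_r; split=> //; split=> //.
have hu : s e = u by have [_ [_ h]] := hC _ (or_introl erefl).
subst u.
have [C1 [h1 [h2 h3]]] := ws_cons_eq c hC.
move: h1 h2; rewrite -app_assoc /= => h1 h2.
have hp1 : pi (St (r e) c ((k, tau +++ rho +++ [:: e]) :: C1)) = 0.
  by rewrite -(pi_wd h1); apply: pi_r; apply: pi_l.
have [u' [C' [g1 [g2 g3]]]] := IH _ _ _ _ _ h2 hp1.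
exists u', C'; move: g1 g3; rewrite -app_assoc /= => g1 g3; split=> //; split=> //; lia.
Qed.

Lemma vp_is_path g u : vpath g u -> is_path r s g.
Proof.
elim: g => [|e g IH] //=; case: g IH => [|f g] IH //= [h1 h2].
by split=> //; apply: IH.
Qed.
Lemma vp_last g u d : g <> nil -> vpath g u -> r (List.last g d) = u.
Proof.
elim: g => [|e g IH] // _ /=; case: g IH => [|f g] IH /= [h1 h2]; first by [].
by apply: IH.
Qed.
Lemma is_path_appl a b : is_path r s (a +++ b) -> is_path r s a.
Proof.
elim: a => [|e a IH] //=; case: a IH => [|f a] IH //= [h1 h2].
by split=> //; apply: IH.
Qed.
Lemma is_path_appr a b : is_path r s (a +++ b) -> is_path r s b.
Proof.
elim: a => [|e a IH] h; first exact: h.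
have h' : is_path r s (e :: (a +++ b)) := h.
apply: IH; move: h'; case: (a +++ b) => [|f l] //= [_ h1]; exact: h1.
Qed.
Lemma is_path_junc a y c d : a <> nil -> is_path r s (a +++ y :: c) -> r (List.last a d) = s y.
Proof.
elim: a => [|e a IH] // _ /=; case: a IH => [|f a] IH /= [h1 h2]; first by [].
by apply: IH.
Qed.
Lemma dup_split g : ~ NoDup (List.map s g) ->
  exists a x b y c, g = a +++ x :: b +++ y :: c /\ s x = s y.
Proof.
elim: g => [|e g IH] /= h; first by case: h; constructor.
case: (classic (In (s e) (List.map s g))) => hin.
  have [y [hy1 hy2]] := proj1 (in_map_iff _ _ _) hin.
  have [b [c hbc]] := in_split _ _ hy2.
  by exists nil, e, b, y, c; rewrite hbc.
have hnd : ~ NoDup (List.map s g) by move=> hnd; apply: h; constructor.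
have [a [x [b [y [c [h1 h2]]]]]] := IH hnd.
by exists (e :: a), x, b, y, c; rewrite h1.
Qed.
Lemma cyc_ex n : forall g e1 t, le (length g) n -> g = e1 :: t -> is_path r s g ->
  r (List.last g e1) = s e1 -> exists p, is_cycle r s p /\ incl p g.
Proof.
elim: n => [|n IH] g e1 t hl hg hp hc; first by subst; simpl in hl; lia.
case: (classic (NoDup (List.map s g))) => hnd.
  by exists g; split; [subst; split=> // | move=> ?].
have [a [x [b [y [c [h1 h2]]]]]] := dup_split hnd.
have hp' : is_path r s (x :: b).
  apply: (@is_path_appl _ (y :: c)); apply: (@is_path_appr a); by rewrite -h1.
have hc' : r (List.last (x :: b) x) = s x.
  rewrite h2; apply: (@is_path_junc (x :: b) y c) => //.
  apply: (@is_path_appr a); by rewrite -h1.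
have hl' : le (length (x :: b)) n.
  move: hl; rewrite h1 List.length_app /= List.length_app /=; lia.
have [p [hp1 hp2]] := IH (x :: b) x b hl' erefl hp' hc'.
exists p; split=> // z hz; rewrite h1; apply: in_or_app; right.
by case: (hp2 z hz) => [<-|hz']; [left | right; apply: in_or_app; left].
Qed.

Lemma S3 n : forall u c C, le (length C) n -> c != 0 -> clist u C -> pi (St u c C) = 0 -> False.
Proof.
elim: n => [|n IH] u c C hl hc hC hp.
  case: C hl hC hp => [|? ?] hl hC hp; last by simpl in hl; lia.
  apply: (V0 hc); rewrite -hp; apply: pi_wd; rewrite /St /=; by rewrite addr0.
case: C hl hC hp => [|[k g] C0] hl hC hp.
  apply: (V0 hc); rewrite -hp; apply: pi_wd; rewrite /St /=; by rewrite addr0.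
case: (classic (exists e f, In e g /\ s f = s e /\ f <> e)) => [[e [f [he [hf hfe]]]]|hB].
  have [tau [rho htr]] := in_split _ _ he.
  subst g.
  have [u' [C' [g1 [g2 g3]]]] := walk hC hp.
  have hu : s e = u' by have [_ [_ h]] := g1 _ (or_introl erefl).
  subst u'; rewrite -hf in g1 g3.
  have [C'' [k1 [k2 k3]]] := @ws_cons_ne f e c k (rho +++ tau) C' (nesym hfe) g1.
  apply: (IH (r f) c C'') => //; first by simpl in hl; lia.
  by rewrite -(pi_wd k1); apply: pi_r; apply: pi_l.
have hB' : forall e f, In e g -> s f = s e -> f = e.
  move=> e f he hf; apply: NNPP => hne; apply: hB; by exists e, f.
case: (classic (exists e, In e g /\ Yset s X (s e))) => [[e [he hy]]|hY].
  have [tau [rho htr]] := in_split _ _ he.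
  subst g.
  have [u' [C' [g1 [g2 g3]]]] := walk hC hp.
  have hu : s e = u' by have [_ [_ h]] := g1 _ (or_introl erefl).
  subst u'.
  have [[l [hen _]] _] := hy.
  apply: (QV hen hy hc).
  have eq : qv (s e) l ⊗ St (s e) c ((k, e :: rho +++ tau) :: C') ≈ cscal c (qv (s e) l).
    rewrite /St mulDr scalMr q_v // /sumR sumW_mull sumW_zero ?addr0 //.
    by move=> k' a ha; have [h1 [_ h3]] := g1 _ ha; apply: q_P.
  by rewrite -(pi_wd eq); apply: pi_l.
have [hne [hv hst]] := hC _ (or_introl erefl).
case: g hne hv hst hB' hY {hC hp hl hB} => [|e1 t] // _ hv hst hB' hY.
have [p [hp1 hp2]] := @cyc_ex (length (e1 :: t)) (e1 :: t) e1 t (le_n _) erefl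
   (vp_is_path hv) ltac:(by rewrite (vp_last e1 _ hv) // -hst).
have [e [f [hf [hsf hef]]]] := HL hp1 (fun f hf hyf => hY (ex_intro _ f (conj (hp2 f hf) hyf))).
by apply: hef; apply: hB' => //; apply: hp2.
Qed.

Lemma vpath_app a b w : vpath (a +++ b) w -> vpath a (startv b w) /\ vpath b w.
Proof.
elim: a => [|e a IH] /=; first by [].
case=> h1 h2; have [h3 h4] := IH h2; split=> //; split=> //.
by rewrite h1; case: a {IH h1 h2 h3}.
Qed.
Lemma vpath_end a v1 v2 : a <> nil -> vpath a v1 -> vpath a v2 -> v1 = v2.
Proof.
elim: a => [|e a IH] // _; case: a IH => [|f a] IH /= [h1 h2] [h3 h4].
  by rewrite -h1 -h3.
by apply: IH.
Qed.

Lemma GP w b : forall g, vpath b w -> vpath g w -> startv b w = startv g w ->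
  le (length b) (length g) ->
  (exists d, g = b +++ d /\ Gt b w ⊗ Pt g w ≈ Pt d w) \/
  ((forall d, g <> b +++ d) /\ Gt b w ⊗ Pt g w ≈ z0).
Proof.
elim: b => [|e b IH] g hb hg hst hl.
  left; exists g; split=> //=; simpl in hst; rewrite {1}hst; exact: v_P.
case: g hg hst hl => [|f g] hg hst hl; first by simpl in hl; lia.
have eqm : Gt (e :: b) w ⊗ Pt (f :: g) w ≈ Gt b w ⊗ (gh e ⊗ ed f) ⊗ Pt g w.
  by rewrite /= -!mulA.
case: (classic (e = f)) => [hef|hef].
  subst f.
  have [hb1 hb2] := hb; have [hg1 hg2] := hg.
  have eqm2 : Gt (e :: b) w ⊗ Pt (e :: g) w ≈ Gt b w ⊗ Pt g w.
    by rewrite eqm ge hb1 G_v.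
  have := IH g hb2 hg2 ltac:(by rewrite -hb1 -hg1) ltac:(simpl in hl; lia).
  case=> [[d [h1 h2]]|[h1 h2]].
    by left; exists d; split; [rewrite h1 | rewrite eqm2 h2].
  right; split; last by rewrite eqm2 h2.
  by move=> d [hd]; apply: (h1 d).
right; split; first by move=> d [hd _]; apply: hef; rewrite hd.
by rewrite eqm gf // mul0r mul0l.
Qed.

Lemma zstep w u0 a1 L : vpath a1 w -> startv a1 w = u0 ->
  (forall x, In x L -> vpath x.2 w /\ startv x.2 w = u0 /\ le (length a1) (length x.2)) ->
  exists c C L', Gt a1 w ⊗ sumR w L ≈ St w c C /\ clist w C /\
    sumR w L ≈ cscal c (Pt a1 w) ⊕ sumR w L' /\ (forall x, In x L' -> In x L) /\
    le (length L') (length L) /\ (In a1 (List.map snd L) -> lt (length L') (length L)).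
Proof.
move=> ha1 hu0; elim: L => [|[k a] L IH] hL.
  exists 0, nil, nil; split; first by rewrite /St /sumR /= mul0r scal0k add0.
  split; first by move=> ? [].
  split; first by rewrite /sumR /= scal0k add0.
  by split=> //; split=> //=; lia.
have [c [C [L' [h1 [h2 [h3 [h4 [h5 h6]]]]]]]] := IH (fun x hx => hL x (or_intror hx)).
have [hva [hsa hla]] := hL _ (or_introl erefl).
simpl in hva, hsa, hla.
have e0 : Gt a1 w ⊗ sumR w ((k, a) :: L) ≈ cscal k (Gt a1 w ⊗ Pt a w) ⊕ Gt a1 w ⊗ sumR w L.
  by rewrite /sumR /= mulDr scalMr.
have e1 : sumR w ((k, a) :: L) ≈ cscal k (Pt a w) ⊕ sumR w L by [].
case: (GP ha1 hva ltac:(by rewrite hu0 hsa) hla) => [[d [hd hg]]|[hd hg]].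
  case: d hd hg => [|f d] hd hg.
    rewrite app_nil_r in hd; subst a.
    exists (k + c), C, L'; split.
      rewrite e0 hg h1 /St addA -scalDl; reflexivity.
    split=> //; split; first by rewrite e1 h3 addA -scalDl.
    split; first by move=> x hx; right; apply: h4.
    split; simpl; lia.
  have hcl : closedp w (f :: d).
    have hv' : vpath (a1 +++ f :: d) w by rewrite -hd.
    split=> //; have [hv1 hv2] := vpath_app hv'; split=> //.
    case: (classic (a1 = nil)) => ha0.
      by move: hu0 hsa; rewrite hd ha0 /= => <-.
    by symmetry; apply: (vpath_end ha0 ha1 hv1).
  exists c, ((k, f :: d) :: C), ((k, a) :: L'); split.
    rewrite e0 hg h1 /St /sumR /= -/(sumR w C) addA (addC (cscal k _)) -addA; reflexivity.
  split; first by move=> x [<-|hx]; [exact: hcl | exact: h2].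
  split; first by rewrite e1 h3 /sumR /= -/(sumR w L') addA (addC (cscal k _)) -addA.
  split; first by move=> x [<-|hx]; [left | right; apply: h4].
  split; first by simpl; lia.
  move=> [hin|hin]; last by have := h6 hin; simpl; lia.
  simpl in hin; subst a1; have := congr1 (@length Ed) hd; rewrite List.length_app /=; lia.
exists c, C, ((k, a) :: L'); split; first by rewrite e0 hg scal0 add0 h1.
split=> //; split; first by rewrite e1 h3 /sumR /= -/(sumR w L') addA (addC (cscal k _)) -addA.
split; first by move=> x [<-|hx]; [left | right; apply: h4].
split; first by simpl; lia.
move=> [hin|hin]; last by have := h6 hin; simpl; lia.
by simpl in hin; subst a1; case: (hd nil); rewrite app_nil_r.
Qed.

Definition goodT w Tl := forall c C, c != 0 -> clist w C -> pi (St w c C ⊗ Tl) = 0 -> False.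

Lemma Zsame w Tl (hT : goodT w Tl) u0 n : forall L, le (length L) n ->
  (forall x, In x L -> vpath x.2 w /\ startv x.2 w = u0) ->
  pi (sumR w L ⊗ Tl) = 0 -> sumR w L ≈ z0.
Proof.
elim: n => [|n IH] L hl hL hp.
  by case: L hl {hL hp} => [|? ?] hl //=; simpl in hl; lia.
case: L hl hL hp => [|x0 L0] hl hL hp; first by [].
set L := x0 :: L0 in hl hL hp *.
have [x [hx hmin]] := @min_elem _ L (@length Ed) ltac:(done).
have [hvx hsx] := hL x hx.
have [c [C [L' [h1 [h2 [h3 [h4 [h5 h6]]]]]]]] :=
  @zstep w u0 x.2 L hvx hsx (fun y hy => let: conj a b := hL y hy in conj a (conj b (hmin y hy))).
have hlt := h6 (in_map _ _ _ hx).
case: (eqVneq c 0) => hc.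
  subst c.
  have e : sumR w L ≈ sumR w L' by rewrite h3 scal0k add0.
  rewrite e; apply: IH; first by lia.
    by move=> y hy; apply: hL; apply: h4.
  by rewrite -hp; apply: pi_wd; rewrite e.
exfalso; apply: (hT c C hc h2).
have e : St w c C ⊗ Tl ≈ Gt x.2 w ⊗ (sumR w L ⊗ Tl) by rewrite -h1 mulA.
by rewrite (pi_wd e); apply: pi_l.
Qed.

Lemma Zlem w Tl (hT : goodT w Tl) n : forall L, le (length L) n ->
  (forall x, In x L -> vpath x.2 w) -> pi (sumR w L ⊗ Tl) = 0 -> sumR w L ≈ z0.
Proof.
elim: n => [|n IH] L hl hL hp.
  by case: L hl {hL hp} => [|? ?] hl //=; simpl in hl; lia.
case: L hl hL hp => [|[k a] L0] hl hL hp; first by [].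
set L := (k, a) :: L0 in hl hL hp *.
have [LA [LB [h1 [h2 [h3 [h4 h5]]]]]] := @sumW_part _ (fun a' => Pt a' w) (fun a' => startv a' w = startv a w) L.
have hin : In (k, a) LA by apply: h5; [left | by []].
have eA : vx (startv a w) ⊗ sumR w L ≈ sumR w LA.
  rewrite /sumR h1 mulDr !sumW_mull.
  rewrite (@sumW_zero _ _ LB); last first.
    by move=> k' a' ha; apply: v_P_ne; have [_ hn] := h3 _ ha; auto.
  rewrite addr0; apply: sumW_ext => k' a' ha; have [_ hs] := h2 _ ha; simpl in hs.
  by rewrite -hs v_P.
have hA : sumR w LA ≈ z0.
  apply: (@Zsame w Tl hT (startv a w) (length LA)) => //.
    by move=> x hx; have [hx1 hx2] := h2 x hx; split=> //; apply: hL.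
  have e : sumR w LA ⊗ Tl ≈ vx (startv a w) ⊗ (sumR w L ⊗ Tl) by rewrite mulA eA.
  by rewrite (pi_wd e); apply: pi_l.
have eB : sumR w L ≈ sumR w LB by rewrite /sumR h1 -/(sumR w LA) hA add0.
rewrite eB; apply: IH.
- have : le 1 (length LA) by case: LA {h1 h2 h4 h5 eA hA eB} hin => [|? ?] //= _; lia.
  move: h4 hl; rewrite /L /=; lia.
- by move=> x hx; apply: hL; have [? _] := h3 x hx.
- by rewrite -hp; apply: pi_wd; rewrite eB.
Qed.

Lemma q_St v l c C : enumerates s v l -> clist v C -> qv v l ⊗ St v c C ≈ cscal c (qv v l).
Proof.
move=> hen hC.
rewrite /St mulDr scalMr q_v // /sumR sumW_mull sumW_zero ?addr0 //.
by move=> k' a ha; have [h1 [_ h3]] := hC _ ha; apply: q_P.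
Qed.

Lemma goodT_w w : goodT w (vx w).
Proof.
move=> c C hc hC hp; apply: (@S3 (length C) w c C (le_n _) hc hC).
rewrite -hp; apply: pi_wd.
rewrite /St mulDl scalMl vv /sumR sumW_mulr; apply: cadd_proper => //.
by symmetry; apply: sumW_ext => k a _; rewrite P_v.
Qed.
Lemma goodT_q w l : Yset s X w -> enumerates s w l -> goodT w (qv w l).
Proof.
move=> hy hen c C hc hC hp; apply: (QV hen hy hc).
have e : qv w l ⊗ (St w c C ⊗ qv w l) ≈ cscal c (qv w l).
  by rewrite mulA q_St // scalMl q_q.
by rewrite -(pi_wd e); apply: pi_l.
Qed.
Lemma goodT_g g : goodT (s g) (ed g).
Proof.
move=> c C hc hC hp.
have [C' [h1 [h2 h3]]] := ws_list hC.
apply: (@S3 (length C') (r g) c C' (le_n _) hc h2).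
have e : gh g ⊗ (St (s g) c C ⊗ ed g) ≈ St (r g) c C'.
  by rewrite mulA /St sw_add ws_v h1.
by rewrite -(pi_wd e); apply: pi_l.
Qed.

Lemma conv0 w L0 : (forall x, In x L0 -> mb x.2 = nil /\ mvx x.2 = w /\ vpath (ma x.2) w) ->
  exists R, sumL L0 ≈ sumR w R /\ (forall y, In y R -> vpath y.2 w).
Proof.
elim: L0 => [|[k [a b v]] L0 IH] h.
  by exists nil; split=> //.
have [R [h1 h2]] := IH (fun x hx => h x (or_intror hx)).
have [hb [hv hp]] := h _ (or_introl erefl); simpl in hb, hv, hp; subst b v.
exists ((k, a) :: R); split; last by move=> y [<-|hy]; [exact: hp | exact: h2].
rewrite /sumL /= -/(sumL L0) h1 /mval /= P_v; reflexivity.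
Qed.

Lemma stepE_list n w e L : vlist L -> (forall x, In x L -> rv x.2 = w /\ le (length (mb x.2)) (S n)) ->
  s e = w -> exists L', sumL L ⊗ ed e ≈ sumL L' /\ vlist L' /\
  (forall x, In x L' -> rv x.2 = r e /\ le (length (mb x.2)) n).
Proof.
move=> hv hL hse.
have [L' [h1 [h2 h3]]] := @sumW_map_ex _ _ (fun m => mval m ⊗ ed e) mval
  (fun m => valid m /\ rv m = r e /\ le (length (mb m)) n) L
  ltac:(move=> k [a b v] hi; have [ha hb] := hv _ hi; have [hr hl] := hL _ hi;
        simpl in ha, hb, hr, hl; clear hi; case: b hb hr hl => [|f b] hb hr hl;
        [ exists [:: (k, Mono (a +++ [:: e]) nil (r e))]; split;
          [ rewrite /= addr0 mE_nil //; rewrite /rv /= in hr; congruence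
          | split; [move=> x [<-|] //=; split; [split=> //; apply: vpath_rcons; rewrite /rv /= in hr; congruence | split=> //; lia] | simpl; lia]]
        | case: (classic (f = e)) => hfe;
          [ subst f; exists [:: (k, Mono a b v)]; split;
            [ rewrite /= addr0 mE_eq //; reflexivity
            | split; [move=> x [<-|] //=; split; [split=> //; by case: hb | split; [by case: hb | simpl in hl; lia]] | simpl; lia]]
          | exists nil; split; [rewrite /= mE_ne // scal0; reflexivity | split; [by [] | simpl; lia]]]]).
exists L'; split; first by rewrite /sumL sumW_mulr; exact: h1.
split; first by move=> x hx; have [? _] := h2 x hx.
by move=> x hx; have [_ ?] := h2 x hx.
Qed.

Lemma bound (L : list (K * mono)) : exists n, forall x, In x L -> le (length (mb x.2)) n.
Proof.
elim: L => [|[k m] L [n hn]]; first by exists 0%N.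
exists (n + length (mb m))%coq_nat => x [<-|hx] /=; first by lia.
by have := hn x hx; lia.
Qed.

Lemma SL1 n : forall w L1, le (length L1) n -> vlist L1 ->
  (forall x, In x L1 -> rv x.2 = w /\ mb x.2 <> nil) ->
  (forall e, s e = w -> sumL L1 ⊗ ed e ≈ z0) -> sumL L1 ≈ z0.
Proof.
elim: n => [|n IH] w L1 hl hv hL hE.
  by case: L1 hl {hv hL hE} => [|? ?] hl //=; simpl in hl; lia.
case: L1 hl hv hL hE => [|[k m] L0] hl hv hL hE; first by [].
set L1 := (k, m) :: L0 in hl hv hL hE *.
have [hrm hbm] := hL _ (or_introl erefl); simpl in hrm, hbm.
case hmb : (mb m) hbm => [|f b0] // _.
have hsf : s f = w by rewrite -hrm /rv hmb.
have [LA [LB [h1 [h2 [h3 [h4 h5]]]]]] := @sumW_part _ mval (fun m' => exists b', mb m' = f :: b') L1.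
have hin : In (k, m) LA by apply: h5; [left | exists b0].
have eA : sumL LA ≈ sumL LA ⊗ ed f ⊗ gh f.
  rewrite /sumL !sumW_mulr; apply: sumW_ext => k' [a b v] ha.
  have [ha1 [b' hb']] := h2 _ ha; simpl in hb'; subst b.
  have [_ hvb] := hv _ (h2 _ ha).1.
  by rewrite mE_eq // mG.
have eB : sumL LB ⊗ ed f ≈ z0.
  rewrite /sumL sumW_mulr; apply: sumW_zero => k' [a b v] hb.
  have [hb1 hb2] := h3 _ hb.
  have [_ hne] := hL _ hb1; simpl in hne, hb2.
  case: b hne hb2 {hb hb1} => [|f' b] // _ hb2.
  apply: mE_ne => hff; apply: hb2; exists b; by rewrite hff.
have hA : sumL LA ≈ z0.
  rewrite eA.
  have : sumL LA ⊗ ed f ≈ sumL L1 ⊗ ed f by rewrite /sumL h1 mulDl -/(sumL LB) eB addr0.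
  move=> ->; rewrite hE //; exact: mul0l.
have eL : sumL L1 ≈ sumL LB by rewrite /sumL h1 -/(sumL LA) hA add0.
rewrite eL; apply: (IH w).
- have : le 1 (length LA) by case: LA {h1 h2 h4 h5 eA hA eL} hin => [|? ?] //= _; lia.
  move: h4 hl; rewrite /L1 /=; lia.
- by move=> x hx; apply: hv; have [? _] := h3 x hx.
- by move=> x hx; apply: hL; have [? _] := h3 x hx.
- by move=> e he; rewrite -eL; apply: hE.
Qed.

Lemma MLw n : forall w L, vlist L -> (forall x, In x L -> rv x.2 = w /\ le (length (mb x.2)) n) ->
  pi (sumL L) = 0 -> sumL L ≈ z0.
Proof.
elim: n => [|n IH] w L hv hL hp;
have [L0 [L1 [h1 [h2 [h3 [h4 h5]]]]]] := @sumW_part _ mval (fun m => mb m = nil) L;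
have [R [hR1 hR2]] : exists R, sumL L0 ≈ sumR w R /\ (forall y, In y R -> vpath y.2 w)
  by apply: conv0 => x hx; have [hx1 hx2] := h2 x hx; have [hr _] := hL _ hx1;
     have [hva _] := hv _ hx1; move: hr hva; rewrite /rv hx2 /= => <-; split.
- (* n = 0 : L1 is empty *)
  have e : sumL L ≈ sumR w R.
    rewrite /sumL h1 -/(sumL L0) hR1 (@sumW_zero _ _ L1) ?addr0 //.
    move=> k m hm; have [hm1 hm2] := h3 _ hm; have [_ hl] := hL _ hm1.
    by exfalso; apply: hm2; case: (mb m) hl => //= ? ? hl; lia.
  rewrite e; apply: (@Zlem w (vx w) (@goodT_w w) (length R)) => //.
  by rewrite -hp; apply: pi_wd; rewrite -e /sumL sumW_mulr; apply: sumW_ext => k m hm; rewrite -(hL _ hm).1 mV.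
- have hE : forall e, s e = w -> sumL L ⊗ ed e ≈ z0.
    move=> e he; have [L' [g1 [g2 g3]]] := stepE_list hv hL he.
    rewrite g1; apply: (IH (r e)) => //.
    by rewrite -(pi_wd g1); apply: pi_r.
  have hLw : sumL L ⊗ vx w ≈ sumL L.
    by rewrite /sumL sumW_mulr; apply: sumW_ext => k m hm; rewrite -(hL _ hm).1 mV.
  have hsplit : sumL L ≈ sumR w R ⊕ sumL L1 by rewrite /sumL h1 -/(sumL L0) hR1.
  case: (classic (X w)) => hX.
    have [l [[hnd hin] _]] := HX hX.
    rewrite -hLw (@ce_CK K V Ed r s X w l hX (conj hnd hin)).
    by apply: sumEE_mulr_zero => e /hin; apply: hE.
  case: (classic (Yset s X w)) => hY.
    have [[l [hen _]] _] := hY.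
    have e1 : sumL L ≈ sumL L ⊗ qv w l.
      rewrite -{1}hLw (@v_decomp w l) mulDr (@sumEE_mulr_zero l) ?addr0 //.
      by case: hen => _ hin e /hin; apply: hE.
    have e2 : sumL L1 ⊗ qv w l ≈ z0.
      rewrite /sumL sumW_mulr; apply: sumW_zero => k [a b v] hm.
      have [hm1 hm2] := h3 _ hm; have [hr _] := hL _ hm1; simpl in hm2, hr.
      case: b hm2 hr {hm hm1} => [|f b] // _ hr.
      rewrite /mval /= -!mulA g_q ?mul0r //; rewrite /rv /= in hr; exact: hr.
    have e3 : sumL L ≈ sumR w R ⊗ qv w l by rewrite e1 hsplit mulDl e2 addr0.
    have hR : sumR w R ≈ z0.
      apply: (@Zlem w (qv w l) (goodT_q hY hen) (length R)) => //.
      by rewrite -hp; apply: pi_wd; rewrite e3.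
    by rewrite e3 hR mul0l.
  case: (classic (exists g, s g = w /\ forall x, In x L1 -> forall b', mb x.2 <> g :: b')) => [[g [hg hgL]]|hng].
    have eg : sumL L1 ⊗ ed g ≈ z0.
      rewrite /sumL sumW_mulr; apply: sumW_zero => k [a b v] hm.
      have [hm1 hm2] := h3 _ hm; simpl in hm2.
      case: b hm2 hm hm1 => [|f b] // _ hm _.
      apply: mE_ne => hfg; subst f; exact: (hgL _ hm b).
    have hR : sumR w R ≈ z0.
      rewrite -hg; apply: (@Zlem (s g) (ed g) (@goodT_g g) (length R)) => //; first by rewrite hg.
      rewrite hg; apply: pi_eq0; rewrite -(hE g hg) hsplit mulDl eg addr0; reflexivity.
    have e4 : sumL L ≈ sumL L1 by rewrite hsplit hR add0.
    rewrite e4; apply: (@SL1 (length L1) w) => //.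
    + by move=> x hx; apply: hv; have [? _] := h3 x hx.
    + move=> x hx; have [hx1 hx2] := h3 x hx; split=> //; by have [? _] := hL _ hx1.
    + by move=> e he; rewrite -e4; apply: hE.
  case: (classic (L1 = nil)) => hL1.
    subst L1.
    have e : sumL L ≈ sumR w R by rewrite hsplit /sumL /= addr0.
    rewrite e; apply: (@Zlem w (vx w) (@goodT_w w) (length R)) => //.
    by rewrite -hp; apply: pi_wd; rewrite -e hLw.
  exfalso.
  set F := List.flat_map (fun x : K * mono => if mb x.2 is f :: _ then [:: f] else nil) L1.
  have hF1 : forall g, s g = w -> In g F.
    move=> g hg; apply: NNPP => hn; apply: hng; exists g; split=> // x hx b' hb.
    apply: hn; apply/in_flat_map; exists x; split=> //; by rewrite hb; left.
  have hF2 : forall g, In g F -> s g = w.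
    move=> g /in_flat_map [x [hx hg]].
    have [hx1 _] := h3 _ hx; have [hr _] := hL _ hx1.
    move: hg hr; rewrite /rv; case: (mb x.2) => [|f b] //= [<-|[]] //.
  have [l [hnd hl]] := nodup_ex F.
  apply: hY; split; last by [].
  exists l; split; first by split=> // e; rewrite hl; split; [exact: hF2 | exact: hF1].
  move=> hl0.
  have [x hx] : exists x, In x L1 by move: hL1; case: (L1) => [|x' ?] // _; exists x'; left.
  have [hx1 hx2] := h3 _ hx; have [hr _] := hL _ hx1.
  case hb : (mb x.2) hx2 hr => [|f b] // _ hr.
  have : In f l by rewrite hl; apply: hF1; rewrite -hr /rv hb.
  by rewrite hl0.
Qed.

Lemma ML n : forall L, le (length L) n -> vlist L -> pi (sumL L) = 0 -> sumL L ≈ z0.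
Proof.
elim: n => [|n IH] L hl hv hp.
  by case: L hl {hv hp} => [|? ?] hl //=; simpl in hl; lia.
case: L hl hv hp => [|[k m] L0] hl hv hp; first by [].
set L := (k, m) :: L0 in hl hv hp *.
have [LA [LB [h1 [h2 [h3 [h4 h5]]]]]] := @sumW_part _ mval (fun m' => rv m' = rv m) L.
have hin : In (k, m) LA by apply: h5; [left | by []].
have eA : sumL L ⊗ vx (rv m) ≈ sumL LA.
  rewrite /sumL h1 mulDl !sumW_mulr.
  rewrite (@sumW_zero _ _ LB); last first.
    by move=> k' a ha; apply: mV_ne; have [_ hn] := h3 _ ha; auto.
  rewrite addr0; apply: sumW_ext => k' a ha; have [_ hs] := h2 _ ha; simpl in hs.
  by rewrite -hs mV.
have [nb hnb] := bound LA.
have hA : sumL LA ≈ z0.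
  apply: (@MLw nb (rv m)).
  - by move=> x hx; apply: hv; have [? _] := h2 x hx.
  - by move=> x hx; split; [have [_ ?] := h2 x hx | apply: hnb].
  - by rewrite -(pi_wd eA); apply: pi_r.
have eB : sumL L ≈ sumL LB by rewrite /sumL h1 -/(sumL LA) hA add0.
rewrite eB; apply: IH.
- have : le 1 (length LA) by case: LA {h1 h2 h4 h5 eA hA eB hnb} hin => [|? ?] //= _; lia.
  move: h4 hl; rewrite /L /=; lia.
- by move=> x hx; apply: hv; have [? _] := h3 x hx.
- by rewrite -hp; apply: pi_wd; rewrite eB.
Qed.

Lemma inj x y : pi x = pi y -> x ≈ y.
Proof.
move=> h; apply: sub_eq0.
have [L [hL hv]] := nf (x ⊕ cneg y).
rewrite hL; apply: (@ML (length L)) => //.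
by rewrite -(pi_wd hL) pi_add pi_neg h GRing.subrr.
Qed.
End Alg.

Unset Implicit Arguments.

Theorem mainTheorem6 (K : fieldType) (V Ed : Type) (r s : Ed -> V) (X : V -> Prop)
  (HX : forall v, X v -> regular s v)
  (HL : relative_condL r s X)
  (A : pzRingType) (pi : cterm K V Ed -> A)
  (pi_wd : forall x y, cohn_eq r s X x y -> pi x = pi y)
  (pi_add : forall x y, pi (cadd x y) = pi x + pi y)
  (pi_mul : forall x y, pi (cmul x y) = pi x * pi y)
  (H1 : forall u, ~ Yset s X u -> pi (cV K Ed u) <> 0)
  (H2 : forall v l, Yset s X v -> enumerates s v l ->
          pi (cadd (cV K Ed v) (cneg (sumEE K V l))) <> 0)
  (H3 : forall v l, Yset s X v -> enumerates s v l -> pi (sumEE K V l) <> 0) :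
  forall x y, pi x = pi y -> cohn_eq r s X x y.
Proof.
move=> x y h.
exact: (inj HX HL pi_wd pi_add pi_mul H1 H2 h).
Qed.
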